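(* Let $a,b$ be real constants with $|a|,|b|\le 0.01$ and define, for real $x>1$, \[f(x)=\frac{(x+a)(x+1)+2b-2\sqrt{x^3+ax+b}\,\sqrt{1+a+b}}{(1-x)^2}.\] Then $f(x)\le 2$ for all $x>1$. *)

(* Defs.v *)
From Stdlib Require Import Reals.
Open Scope R_scope.

Definition fA2 (a b x : R) : R :=
  ((x + a) * (x + 1) + 2 * b - 2 * sqrt (x ^ 3 + a * x + b) * sqrt (1 + a + b))
  / (1 - x) ^ 2.

(* Main.v *)
Require Import Defs.
From Stdlib Require Import Reals.
From Stdlib Require Import Lra Psatz.
Open Scope R_scope.

Theorem lemmaA2 (a b : R) (ha : Rabs a <= (1/100)) (hb : Rabs b <= (1/100)) :
  forall x : R, 1 < x -> fA2 a b x <= 2.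
Proof.
  intros x hx. unfold fA2.
  assert (Ha : -(1/100) <= a <= 1/100) by (pose proof (Rle_abs a); pose proof (Rle_abs (-a)); rewrite Rabs_Ropp in *; lra).
  assert (Hb : -(1/100) <= b <= 1/100) by (pose proof (Rle_abs b); pose proof (Rle_abs (-b)); rewrite Rabs_Ropp in *; lra).
  assert (HP : 0 < x ^ 3 + a * x + b) by nra.
  assert (HQ : 0 < 1 + a + b) by lra.
  set (P := x ^ 3 + a * x + b) in *.
  set (Q := 1 + a + b) in *.
  assert (Hs := sqrt_sqrt P (Rlt_le _ _ HP)).
  assert (Ht := sqrt_sqrt Q (Rlt_le _ _ HQ)).
  assert (Hs0 := sqrt_pos P). assert (Ht0 := sqrt_pos Q).
  set (s := sqrt P) in *. set (t := sqrt Q) in *.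
  set (L := - x^2 + (5 + a) * x + (a + 2 * b - 2)).
  assert (HL : L <= 2 * (s * t)).
  { destruct (Rle_lt_dec L 0) as [h|h].
    - nra.
    - assert (Hx6 : x < 6) by (unfold L in h; nra).
      set (h1 := 12 + 6 * a + 4 * b).
      set (h0 := 4 * b * Q - (a + 2 * b - 2) ^ 2).
      assert (HG : 4 * P * Q - L ^ 2 = (x - 1) ^ 2 * (- x ^ 2 + h1 * x + h0)).
      { unfold h1, h0, L, Q, P. ring. }
      assert (HH : 0 < - x ^ 2 + h1 * x + h0).
      { assert (E1 : 0 <= (x - 1) * (6 - x)) by nra.
        assert (E2 : (a + 2 * b - 2) ^ 2 <= 5) by nra.
        assert (E3 : - (1/10) <= 4 * b * Q) by (unfold Q; nra).
        assert (E4 : 0 <= (h1 - 7) * x) by (apply Rmult_le_pos; unfold h1; lra).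
        assert (E5 : -(51/10) <= h0) by (unfold h0; lra).
        assert (E6 : - x ^ 2 + h1 * x + h0 = (x - 1) * (6 - x) + (h1 - 7) * x + (h0 + 6)) by ring.
        rewrite E6. lra. }
      assert (HG1 : 0 <= (x - 1) ^ 2 * (- x ^ 2 + h1 * x + h0))
        by (apply Rmult_le_pos; [apply pow2_ge_0 | lra]).
      assert (HG0 : L ^ 2 <= 4 * P * Q) by lra.
      assert (HPQ : (s * t) ^ 2 = P * Q) by (rewrite <- Hs, <- Ht; ring).
      assert (0 <= s * t) by nra.
      nra. }
  assert (D : 0 < (1 - x) ^ 2) by nra.
  apply Rmult_le_reg_r with ((1 - x) ^ 2); [exact D|].
  unfold Rdiv. rewrite Rmult_assoc, Rinv_l by lra.
  unfold L in HL. nra.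
Qed.
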